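(* Assume $D\le\tfrac12$. Let $\pi^*$ be the naive AM strategy with $\pi^*_m=\dfrac{e_m-d_m}{1-D}$ for every $m\in\mathcal M$ (the strategy called Undefended). Then the M strategy $\rho^*$ with $\rho^*_m=1$ for all $m\in\mathcal M$ (always attack) is a best response of M to $\pi^*$, and $u_{AM}(\pi^*,\rho^* )=D$. Moreover $u_{AM}(\pi,\rho)\le D$ for every AM strategy $\pi$ and every M strategy $\rho$; hence $(\pi^*,\rho^* )$ is an AM-optimal equilibrium among all AM strategies, in which AM protects every machine it defends.
   Context: Let $\mathcal M$ be a finite nonempty set of machine (environment) types. Let $e\in[0,1]^{\mathcal M}$ with $\sum_{r\in\mathcal M}e_r=1$ ($e_r$ is the fraction of all real machines that are of type $r$), and $d\in[0,1]^{\mathcal M}$ with $0\le d_r\le e_r$ ($d_r$ is the fraction of all real machines that are of type $r$ and defended by the anti-malware AM); put $D=\sum_{r}d_r$. An AM strategy $\pi$ assigns to each real machine type $r\in\mathcal M$ a vector $\pi^r\in[0,1]^{\mathcal M}$ with $\sum_{m}\pi^r_m\le 1$ ($\pi^r_m$ is the probability that AM creates a sandbox of type $m$ on a defended real machine of type $r$; with probability $1-\sum_m\pi^r_m$ no sandbox is created). AM's strategy is naive if $\pi^r$ does not depend on $r$; then we write $\pi_m$ for $\pi^r_m$. A malware (M) strategy is a vector $\rho\in[0,1]^{\mathcal M}$ ($\rho_m$ is the probability M attacks when it perceives environment $m$). The utilities are $$u_M(\pi,\rho)=\sum_{r\in\mathcal M}\Big[(e_r-d_r)\rho_r+d_r\Big(1-\sum_{m\in\mathcal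 M}\pi^r_m\rho_m\Big)\rho_r\Big],$$ $$u_{AM}(\pi,\rho)=\sum_{r\in\mathcal M}d_r\Big[\sum_{m\in\mathcal M}\big(\pi^r_m\rho_m+\pi^r_m(1-\rho_m)(1-\rho_r)\big)+\Big(1-\sum_{m\in\mathcal M}\pi^r_m\Big)(1-\rho_r)\Big].$$ A best response of M to $\pi$ is any $\rho\in\arg\max_{\hat\rho\in[0,1]^{\mathcal M}}u_M(\pi,\hat\rho)$. A pair $(\pi,\rho)$ with $\rho$ a best response to $\pi$ is an equilibrium; it is AM-optimal within a class of AM strategies if $\pi$ lies in the class and $u_{AM}(\pi,\rho)\ge u_{AM}(\pi',\rho')$ for every equilibrium $(\pi',\rho')$ with $\pi'$ in the class. *)

(* Defs.v *)
From mathcomp Require Import all_boot all_order all_algebra.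
Set Implicit Arguments. Unset Strict Implicit. Unset Printing Implicit Defensive.
Import Order.TTheory GRing.Theory Num.Theory.
Local Open Scope ring_scope.

(* Machine types: a finite type M.  e r, d r : fractions of machines.
   An AM strategy pi : M -> M -> R, with  pi r m = pi^r_m
   (r = real machine type, m = sandbox type). *)

Section Game.
Variables (R : realFieldType) (M : finType) (e d : M -> R).

Definition Dtot : R := \sum_(r : M) d r.

Definition is_AMstrat (pi : M -> M -> R) : Prop :=
  forall r, (forall m, 0 <= pi r m <= 1) /\ \sum_(m : M) pi r m <= 1.

Definition naive (pi : M -> M -> R) : Prop :=
  forall r r' m, pi r m = pi r' m.

Definition is_Mstrat (rho : M -> R) : Prop := forall m, 0 <= rho m <= 1.

Definition uM (pi : M -> M -> R) (rho : M -> R) : R :=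
  \sum_(r : M) ((e r - d r) * rho r
                + d r * (1 - \sum_(m : M) pi r m * rho m) * rho r).

Definition uAM (pi : M -> M -> R) (rho : M -> R) : R :=
  \sum_(r : M) d r *
    (\sum_(m : M) (pi r m * rho m + pi r m * (1 - rho m) * (1 - rho r))
     + (1 - \sum_(m : M) pi r m) * (1 - rho r)).

Definition best_response (pi : M -> M -> R) (rho : M -> R) : Prop :=
  is_Mstrat rho /\ forall rho', is_Mstrat rho' -> uM pi rho' <= uM pi rho.

Definition equilibrium (pi : M -> M -> R) (rho : M -> R) : Prop :=
  best_response pi rho.

Definition AM_optimal (cls : (M -> M -> R) -> Prop)
    (pi : M -> M -> R) (rho : M -> R) : Prop :=
  cls pi /\ equilibrium pi rho /\
  forall pi' rho', cls pi' -> equilibrium pi' rho' -> uAM pi' rho' <= uAM pi rho.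

End Game.

(* Main.v *)
Require Import Defs.
From mathcomp Require Import all_boot all_order all_algebra.
From mathcomp Require Import ring lra.
Import Order.TTheory GRing.Theory Num.Theory.
Local Open Scope ring_scope.

Lemma uM_naive (R : realFieldType) (M : finType) (e d c rho : M -> R) (k : R) :
  k != 0 ->
  (forall m, c m = (e m - d m) / k) ->
  uM e d (fun _ m => c m) rho =
  k * (\sum_m c m * rho m) + (1 - \sum_m c m * rho m) * \sum_r d r * rho r.
Proof.
move=> hk hc; rewrite /uM big_split /=; congr (_ + _).
  rewrite mulr_sumr; apply: eq_bigr => r _; rewrite hc; field; exact: hk.
rewrite mulr_sumr; apply: eq_bigr => r _; ring.
Qed.

Lemma bracket_le1 (R : realFieldType) (M : finType) (p : M -> R) (rho : M -> R) (x : R) :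
  (forall m, 0 <= p m) -> \sum_m p m <= 1 -> (forall m, 0 <= rho m <= 1) ->
  0 <= x <= 1 ->
  \sum_m (p m * rho m + p m * (1 - rho m) * (1 - x)) + (1 - \sum_m p m) * (1 - x) <= 1.
Proof.
move=> hp hs hr /andP[x0 x1].
have h : \sum_m (p m * rho m + p m * (1 - rho m) * (1 - x)) <= \sum_m p m.
  apply: ler_sum => m _; have := hp m; have /andP[a b] := hr m => pm.
  have q : 0 <= p m * (1 - rho m) by apply: mulr_ge0; lra.
  have q2 : p m * (1 - rho m) * (1 - x) <= p m * (1 - rho m).
    by rewrite -[leRHS]mulr1; apply: ler_wpM2l; lra.
  lra.
move: h; set A := \sum_m _; set P := \sum_m p m => h.
have hh : (1 - P) * (1 - x) <= 1 - P.
  have hs2 : P <= 1 := hs.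
  rewrite -[leRHS]mulr1; apply: ler_wpM2l; lra.
have hs3 : P <= 1 := hs.
lra.
Qed.

Theorem theorem3 (R : realFieldType) (M : finType) (e d : M -> R) :
  (exists m0 : M, True) ->
  (forall r, 0 <= e r <= 1) ->
  \sum_(r : M) e r = 1 ->
  (forall r, 0 <= d r <= e r) ->
  Dtot d <= 2^-1 ->
  let pistar : M -> M -> R := fun _ m => (e m - d m) / (1 - Dtot d) in
  let rhostar : M -> R := fun _ => 1 in
  [/\ is_AMstrat pistar /\ naive pistar,
      best_response e d pistar rhostar,
      uAM d pistar rhostar = Dtot d,
      (forall pi rho, is_AMstrat pi -> is_Mstrat rho -> uAM d pi rho <= Dtot d)
    & AM_optimal e d (@is_AMstrat R M) pistar rhostar].
Proof.
move=> _ he hes hd hD pistar rhostar.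
set D := Dtot d in hD pistar *.
have hD0 : 0 <= D by apply: sumr_ge0 => r _; case/andP: (hd r).
have hD2 : D <= 1/2 by rewrite mul1r.
have hk : 0 < 1 - D by lra.
have hk0 : 1 - D != 0 by rewrite gt_eqF.
have hsed : \sum_m (e m - d m) = 1 - D by rewrite sumrB hes.
have hsum : \sum_m (e m - d m) / (1 - D) = 1.
  by rewrite -mulr_suml hsed divff.
have hed m : 0 <= e m - d m by case/andP: (hd m) => _ h; lra.
have hpi0 m : 0 <= (e m - d m) / (1 - D) by apply: divr_ge0 => //; exact: ltW.
have hpi1 m : (e m - d m) / (1 - D) <= 1.
  rewrite -[leRHS]hsum [leRHS](bigD1 m) //= lerDl; apply: sumr_ge0 => i _; exact: hpi0.
have AM : is_AMstrat pistar.
  by move=> r; split; [move=> m; rewrite hpi0 hpi1 | rewrite /pistar hsum].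
have Mstar : is_Mstrat rhostar by move=> m; rewrite /rhostar ler01 lexx.
have uAMstar : uAM d pistar rhostar = D.
  rewrite /uAM /D /Dtot; apply: eq_bigr => r _.
  rewrite /rhostar subrr !mulr0 addr0.
  under eq_bigr do rewrite mulr1 mulr0 addr0.
  by rewrite /pistar hsum mulr1.
have bound : forall pi rho, is_AMstrat pi -> is_Mstrat rho -> uAM d pi rho <= D.
  move=> pi rho hpi hrho; rewrite /uAM /D /Dtot; apply: ler_sum => r _.
  have [hp hs] := hpi r.
  have hb := @bracket_le1 _ _ (pi r) rho (rho r) (fun m => proj1 (andP (hp m))) hs hrho (hrho r).
  have := hd r; case/andP => d0 _.
  by rewrite -[leRHS]mulr1; apply: ler_wpM2l.
have BR : best_response e d pistar rhostar.
  split=> // rho hrho.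
  rewrite /pistar !(@uM_naive _ _ e d (fun m => (e m - d m) / (1 - D)) _ (1 - D)) //.
  rewrite /rhostar.
  have h1 : \sum_m (e m - d m) / (1 - D) * 1 = 1.
    by under eq_bigr do rewrite mulr1.
  rewrite h1 subrr mul0r addr0.
  set S := \sum_m _ * rho m; set T := \sum_r d r * rho r.

  rewrite mulr1.
  have S0 : 0 <= S by apply: sumr_ge0 => m _; case/andP: (hrho m) => a _; exact: mulr_ge0.
  have S1 : S <= 1.
    rewrite -hsum; apply: ler_sum => m _; case/andP: (hrho m) => a b.
    by rewrite -[leRHS]mulr1; apply: ler_wpM2l.
  have T0 : 0 <= T by apply: sumr_ge0 => m _; case/andP: (hrho m) => a _; case/andP: (hd m) => c _; exact: mulr_ge0.
  have T1 : T <= D.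
    apply: ler_sum => m _; case/andP: (hrho m) => a b; case/andP: (hd m) => c _.
    by rewrite -[leRHS]mulr1; apply: ler_wpM2l.
  nra.
split.
- by split=> // r r' m.
- exact: BR.
- exact: uAMstar.
- exact: bound.
- split; first exact: AM.
  split; first exact: BR.
  move=> pi' rho' hpi' [hrho' _]; rewrite uAMstar; exact: bound.
Qed.
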